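(* Let $(\alpha_0,x_0)$ be a pointed transitive pre-action of $\Gamma=\mathrm{BS}(m,n)$ and let $\alpha$ be its maximal forest saturation. Then $\mathrm{Stab}_\alpha(x_0)=\mathrm{Stab}_{\alpha_0}(x_0)$. In particular the action $\alpha$ is isomorphic (as a pointed action) to $\mathrm{Stab}_{\alpha_0}(x_0)\backslash\Gamma\curvearrowleft\Gamma$ with basepoint the trivial coset.
   Context: $\mathrm{BS}(m,n)=\langle b,t\mid tb^mt^{-1}=b^n\rangle$, $|m|,|n|\ge2$; maps act on the right. A pre-action is $(X,\beta,\tau)$ with $\beta$ a bijection of $X$, $\tau$ a partial bijection, $\mathrm{dom}(\tau)$ $\beta^n$-invariant, $\mathrm{rng}(\tau)$ $\beta^m$-invariant, and $x\tau\beta^m=x\beta^n\tau$ on $\mathrm{dom}(\tau)$; saturated means $\mathrm{dom}(\tau)=\mathrm{rng}(\tau)=X$ (a genuine action). Schreier graph $\mathrm{Sch}(\alpha)$: vertices $X$, $b$-edges $x\to x\beta$ and $t$-edges $x\to x\tau$ ($x\in\mathrm{dom}\tau$), with opposite inverse-labelled edges; transitive means connected. For a path $c$, $\Psi(c)\in\Gamma$ is the element represented by its label; $\mathrm{Stab}_\alpha(x_0)=\Psi(\pi_1(\mathrm{Sch}(\alpha),x_0))$ (for a saturated pre-action this is the usual stabilizer). Bass–Serre graph $\mathrm{BS}(\alpha)$: vertices are $\beta$-orbits, positive edges are $\beta^n$-orbits in $\mathrm{dom}(\tau)$ (the edge $x\langle\beta^n\rangle$ goes from $x\langle\beta\rangle$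 to $x\tau\langle\beta\rangle$), negative edges are $\beta^m$-orbits in $\mathrm{rng}(\tau)$ (opposites); labels are cardinalities. A maximal forest saturation of $\alpha_0$ is a saturated pre-action $\alpha$ extending $\alpha_0$ such that in $\mathrm{BS}(\alpha)$: the subgraph induced on old vertices is $\mathrm{BS}(\alpha_0)$, the subgraph induced on new vertices is a forest, each forest component is attached to $\mathrm{BS}(\alpha_0)$ by a single pair of opposite edges, and each new vertex $v'$ with parent $v$ (neighbour closer to $\mathrm{BS}(\alpha_0)$) has label $L(v')=|m|L(v)/\gcd(L(v),n)$ if the edge from $v$ to $v'$ is positive and $L(v')=|n|L(v)/\gcd(L(v),m)$ if negative (with $\gcd(\infty,k)=|k|$, $\infty$ labels stay $\infty$). It is unique up to isomorphism fixing $\alpha_0$. *)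

(* Defs.v *)
From mathcomp Require Import all_boot all_order all_algebra.
Set Implicit Arguments.
Unset Strict Implicit.
Unset Printing Implicit Defensive.

Inductive letter := Lb | Lbi | Lt | Lti.

Definition linv (l : letter) : letter :=
  match l with Lb => Lbi | Lbi => Lb | Lt => Lti | Lti => Lt end.

Definition winv (w : seq letter) : seq letter := rev (map linv w).

Definition powb (k : int) : seq letter :=
  match k with Posz j => nseq j Lb | Negz j => nseq j.+1 Lbi end.

(* Equality in BS(m,n) = <b,t | t b^m t^-1 = b^n>: the smallest congruence on
   words containing free cancellation and the defining relation. *)
Inductive bs_eq (m n : int) : seq letter -> seq letter -> Prop :=
| bs_refl w : bs_eq m n w w
| bs_sym w w' : bs_eq m n w w' -> bs_eq m n w' w
| bs_trans w1 w2 w3 : bs_eq m n w1 w2 -> bs_eq m n w2 w3 -> bs_eq m n w1 w3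
| bs_ctx u v w w' : bs_eq m n w w' -> bs_eq m n (u ++ w ++ v) (u ++ w' ++ v)
| bs_free l : bs_eq m n [:: l; linv l] [::]
| bs_rel : bs_eq m n (Lt :: powb m ++ [:: Lti]) (powb n).

Definition bpow {X : Type} (b bi : X -> X) (k : int) (x : X) : X :=
  match k with Posz j => iter j b x | Negz j => iter j.+1 bi x end.

Definition in_dom {X : Type} (t : X -> option X) (x : X) : Prop :=
  exists y, t x = Some y.
Definition in_rng {X : Type} (t : X -> option X) (y : X) : Prop :=
  exists x, t x = Some y.

(* A pre-action (X, beta, tau): beta a bijection (pa_b with inverse pa_bi),
   tau a partial bijection (pa_t x = Some y means x tau = y). *)
Record preaction (m n : int) (X : Type) := PreAction {
  pa_b : X -> X;
  pa_bi : X -> X;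
  pa_t : X -> option X;
  pa_bK : cancel pa_b pa_bi;
  pa_biK : cancel pa_bi pa_b;
  pa_t_inj : forall x y z, pa_t x = Some z -> pa_t y = Some z -> x = y;
  pa_dom_inv : forall x, in_dom pa_t x <-> in_dom pa_t (bpow pa_b pa_bi n x);
  pa_rng_inv : forall y, in_rng pa_t y <-> in_rng pa_t (bpow pa_b pa_bi m y);
  pa_comm : forall x y, pa_t x = Some y ->
     pa_t (bpow pa_b pa_bi n x) = Some (bpow pa_b pa_bi m y)
}.

Section PreActionDefs.
Variables (m n : int).

Definition saturated {X : Type} (a : preaction m n X) : Prop :=
  forall x, in_dom (pa_t a) x /\ in_rng (pa_t a) x.

Definition sch_step {X : Type} (a : preaction m n X) (x : X) (l : letter) (y : X)
  : Prop :=
  match l with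
  | Lb => y = pa_b a x
  | Lbi => y = pa_bi a x
  | Lt => pa_t a x = Some y
  | Lti => pa_t a y = Some x
  end.

Inductive walk {X : Type} (a : preaction m n X) : X -> seq letter -> X -> Prop :=
| walk_nil x : walk a x [::] x
| walk_cons x l x' w y : sch_step a x l x' -> walk a x' w y -> walk a x (l :: w) y.

Definition transitive_pa {X : Type} (a : preaction m n X) : Prop :=
  forall x y, exists w, walk a x w y.

(* Stab_a(x0) = Psi(pi_1(Sch(a), x0)), as a set of elements of BS(m,n)
   (an element is given by any word representing it). *)
Definition stab {X : Type} (a : preaction m n X) (x0 : X) (g : seq letter) : Prop :=
  exists w, walk a x0 w x0 /\ bs_eq m n g w.

Definition extends {X0 X : Type} (a0 : preaction m n X0) (a : preaction m n X)
  (iota : X0 -> X) : Prop :=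
  injective iota /\
  (forall x, iota (pa_b a0 x) = pa_b a (iota x)) /\
  (forall x y, pa_t a0 x = Some y -> pa_t a (iota x) = Some (iota y)).

(* vertices: beta-orbits *)
Definition same_orbit {X : Type} (a : preaction m n X) (x y : X) : Prop :=
  exists k : int, y = bpow (pa_b a) (pa_bi a) k x.

(* Edges are encoded as (s, x) with x in dom(tau): (true, x) is the positive
   edge x<beta^n> from x<beta> to x tau<beta>; (false, x) is its opposite, the
   negative edge (x tau)<beta^m> from x tau<beta> to x<beta>. *)
Definition edge (X : Type) := (bool * X)%type.

Definition tval {X : Type} (a : preaction m n X) (x : X) : X := odflt x (pa_t a x).

Definition valid_edge {X : Type} (a : preaction m n X) (e : edge X) : Prop :=
  in_dom (pa_t a) e.2.
Definition orig {X : Type} (a : preaction m n X) (e : edge X) : X :=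
  if e.1 then e.2 else tval a e.2.
Definition targ {X : Type} (a : preaction m n X) (e : edge X) : X :=
  if e.1 then tval a e.2 else e.2.
Definition opp {X : Type} (e : edge X) : edge X := (~~ e.1, e.2).
(* equality of edges: same sign and same beta^n-orbit
   (for negative edges this is equivalent to same beta^m-orbit of x tau) *)
Definition edge_eq {X : Type} (a : preaction m n X) (e f : edge X) : Prop :=
  e.1 = f.1 /\ exists k : int, f.2 = bpow (pa_b a) (pa_bi a) (k * n)%R e.2.

Definition old_v {X0 X : Type} (a : preaction m n X) (iota : X0 -> X) (x : X)
  : Prop := exists y0, same_orbit a x (iota y0).
Definition new_v {X0 X : Type} (a : preaction m n X) (iota : X0 -> X) (x : X)
  : Prop := ~ old_v a iota x.

(* e :: es is a reduced path (no backtracking) in the Bass-Serre graph;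
   the validity of e itself is required separately *)
Fixpoint rpath {X : Type} (a : preaction m n X) (e : edge X) (es : seq (edge X))
  : Prop :=
  match es with
  | [::] => True
  | f :: es' => valid_edge a f /\ same_orbit a (targ a e) (orig a f) /\
                ~ edge_eq a (opp e) f /\ rpath a f es'
  end.

Definition allS {A : Type} (P : A -> Prop) (s : seq A) : Prop :=
  foldr (fun x acc => P x /\ acc) True s.

Inductive new_conn {X0 X : Type} (a : preaction m n X) (iota : X0 -> X)
  : X -> X -> Prop :=
| nc_refl x y : same_orbit a x y -> new_conn a iota x y
| nc_step x e y : valid_edge a e -> same_orbit a x (orig a e) ->
     new_v a iota (targ a e) -> new_conn a iota (targ a e) y ->
     new_conn a iota x y.

(* vertex labels: cardinality of the beta-orbit (finite k, or infinite) *)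
Definition fin_lab {X : Type} (a : preaction m n X) (x : X) (k : nat) : Prop :=
  (0 < k)%N /\ iter k (pa_b a) x = x /\
  forall j, (0 < j)%N -> (j < k)%N -> iter j (pa_b a) x <> x.
Definition inf_lab {X : Type} (a : preaction m n X) (x : X) : Prop :=
  forall k, (0 < k)%N -> iter k (pa_b a) x <> x.

Definition child_lab (pos : bool) (k : nat) : nat :=
  if pos then (absz m * k) %/ gcdn k (absz n) else (absz n * k) %/ gcdn k (absz m).

Definition max_forest_saturation {X0 X : Type} (a0 : preaction m n X0)
  (a : preaction m n X) (iota : X0 -> X) : Prop :=
  saturated a /\ extends a0 a iota /\
  (* subgraph induced on old vertices is BS(a0): no new edge between old vertices *)
  (forall x, in_dom (pa_t a) x -> old_v a iota x -> old_v a iota (tval a x) ->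
     exists y0, in_dom (pa_t a0) y0 /\ edge_eq a (true, x) (true, iota y0)) /\
  (* subgraph induced on new vertices is a forest: no closed reduced path of
     positive length through new vertices *)
  (forall e es, valid_edge a e -> rpath a e es ->
     new_v a iota (orig a e) -> allS (fun f => new_v a iota (targ a f)) (e :: es) ->
     ~ same_orbit a (targ a (last e es)) (orig a e)) /\
  (* each component is attached to BS(a0) by a single pair of opposite edges *)
  (forall v, new_v a iota v ->
     (exists e, valid_edge a e /\ old_v a iota (orig a e) /\ new_conn a iota v (targ a e)) /\
     (forall e e', valid_edge a e -> valid_edge a e' ->
        old_v a iota (orig a e) -> old_v a iota (orig a e') ->
        new_conn a iota v (targ a e) -> new_conn a iota v (targ a e') ->
        edge_eq a e e')) /\
  (* label rule: along every reduced path leaving BS(a0) into the forest, the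
     last edge goes from the parent v to the child v' *)
  (forall e es, valid_edge a e -> rpath a e es -> old_v a iota (orig a e) ->
     allS (fun f => new_v a iota (targ a f)) (e :: es) ->
     let f := last e es in
     (inf_lab a (orig a f) -> inf_lab a (targ a f)) /\
     (forall k, fin_lab a (orig a f) k -> fin_lab a (targ a f) (child_lab f.1 k))).

End PreActionDefs.

(* Main.v *)
Require Import Defs.
From mathcomp Require Import all_boot all_order all_algebra zify.
From Stdlib Require Import ClassicalEpsilon Classical.
Set Implicit Arguments. Unset Strict Implicit. Unset Printing Implicit Defensive.
Import GRing.Theory Num.Theory.
Local Open Scope ring_scope.

Section BP.
Variables (X : Type) (b bi : X -> X) (bK : cancel b bi) (biK : cancel bi b).
Local Notation bp := (bpow b bi).

Lemma bpow0 x : bp 0 x = x. Proof. by []. Qed.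

Lemma bpowS k x : bp (k + 1) x = b (bp k x).
Proof.
case: k => [j|j].
  have -> : Posz j + 1 = Posz j.+1 by lia.
  by [].
case: j => [|j]; first by rewrite /= biK.
have -> : Negz j.+1 + 1 = Negz j by lia.
by rewrite /= biK.
Qed.

Lemma bpowN1 k x : bp (k - 1) x = bi (bp k x).
Proof.
have := bpowS (k - 1) x; rewrite subrK => ->; by rewrite bK.
Qed.

Lemma bpowD i j x : bp (i + j) x = bp j (bp i x).
Proof.
elim/int_ind: j => [|j IH|j IH]; first by rewrite addr0.
  have -> : Posz j.+1 = Posz j + 1 by lia.
  rewrite addrA bpowS IH.
  by rewrite -bpowS.
have -> : - Posz j.+1 = - Posz j - 1 by lia.
rewrite addrA bpowN1 IH -bpowN1 //.
Qed.
End BP.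
Section BSW.
Variables (m n : int).
Local Notation "u ~~ v" := (bs_eq m n u v) (at level 70).

Lemma bs_catl u u' v : u ~~ u' -> u ++ v ~~ u' ++ v.
Proof. move=> h; have := bs_ctx [::] v h; by []. Qed.
Lemma bs_catr u v v' : v ~~ v' -> u ++ v ~~ u ++ v'.
Proof. move=> h; have := bs_ctx u [::] h; by rewrite !cats0. Qed.
Lemma bs_cat u u' v v' : u ~~ u' -> v ~~ v' -> u ++ v ~~ u' ++ v'.
Proof. move=> h1 h2; apply: bs_trans (bs_catl _ h1) (bs_catr _ h2). Qed.
Lemma bs_cons l v v' : v ~~ v' -> l :: v ~~ l :: v'.
Proof. exact: (bs_catr [:: l]). Qed.
Lemma bs_cancel u l v : u ++ l :: linv l :: v ~~ u ++ v.
Proof. have := bs_ctx u v (bs_free m n l); by []. Qed.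

Lemma powbS k : powb (k + 1) ~~ powb k ++ [:: Lb].
Proof.
case: k => [j|j].
  have -> : Posz j + 1 = Posz j.+1 by lia.
  have -> : powb (Posz j.+1) = powb (Posz j) ++ [:: Lb].
    by rewrite /=; elim: j => //= j ->.
  exact: bs_refl.
case: j => [|j].
  have -> : Negz 0 + 1 = 0 by lia.
  apply: bs_sym; exact: (bs_free m n Lbi).
have -> : Negz j.+1 + 1 = Negz j by lia.
apply: bs_sym.
have -> : powb (Negz j.+1) ++ [:: Lb] = nseq j.+1 Lbi ++ [:: Lbi; linv Lbi] ++ [::].
  by rewrite /=; congr (_ :: _); elim: j => //= j ->.
have := bs_cancel (nseq j.+1 Lbi) Lbi [::]; by rewrite cats0.
Qed.

Lemma powbN1 k : powb (k - 1) ~~ powb k ++ [:: Lbi].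
Proof.
apply: bs_sym.
have h := bs_catl [:: Lbi] (powbS (k - 1)); rewrite subrK in h.
apply: (bs_trans h); rewrite -catA /=.
have := bs_cancel (powb (k - 1)) Lb [::]; by rewrite cats0.
Qed.

Lemma powbD i j : powb (i + j) ~~ powb i ++ powb j.
Proof.
elim/int_ind: j => [|j IH|j IH]; first by rewrite addr0 cats0; exact: bs_refl.
  have -> : Posz j.+1 = Posz j + 1 by lia.
  rewrite addrA; apply: bs_trans (powbS _) _; apply: bs_trans (bs_catl _ IH) _.
  rewrite -catA; apply: bs_catr; apply: bs_sym; exact: powbS.
have -> : - Posz j.+1 = - Posz j - 1 by lia.
rewrite addrA; apply: bs_trans (powbN1 _) _; apply: bs_trans (bs_catl _ IH) _.
rewrite -catA; apply: bs_catr; apply: bs_sym; exact: powbN1.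
Qed.

Lemma powb_cancel k : powb k ++ powb (- k) ~~ [::].
Proof. apply: bs_sym; apply: bs_trans (powbD _ _); rewrite subrr; exact: bs_refl. Qed.

Definition Ct u := Lt :: u ++ [:: Lti].
Definition Cti u := Lti :: u ++ [:: Lt].

Lemma Ct_cat u v : Ct (u ++ v) ~~ Ct u ++ Ct v.
Proof.
rewrite /Ct /= -!catA /=; apply: bs_cons; apply: bs_sym.
exact: (bs_cancel u Lti (v ++ [:: Lti])).
Qed.
Lemma Ct_nil : Ct [::] ~~ [::]. Proof. exact: (bs_free m n Lt). Qed.

Lemma Ct_cong u v : u ~~ v -> Ct u ~~ Ct v.
Proof. move=> h; rewrite /Ct; apply: bs_cons; exact: bs_catl. Qed.

Lemma Ct_pow k : Ct (powb (m * k)) ~~ powb (n * k).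
Proof.
elim/int_ind: k => [|k IH|k IH]; first by rewrite !mulr0; exact: Ct_nil.
  have -> : Posz k.+1 = Posz k + 1 by lia.
  rewrite !mulrDr !mulr1.
  have h1 : Ct (powb (m * k + m)) ~~ Ct (powb (m * k) ++ powb m).
    apply: Ct_cong; exact: powbD.
  apply: (bs_trans h1); apply: (bs_trans (Ct_cat _ _)).
  apply: (bs_trans (bs_cat IH (bs_rel m n))).
  apply: bs_sym; exact: powbD.
have -> : - Posz k.+1 = - Posz k - 1 by lia.
rewrite !mulrDr !mulrN1.
have hm : Ct (powb (- m)) ~~ powb (- n).
  have h2 : Ct (powb (- m)) ++ (powb n ++ powb (- n)) ~~ Ct (powb (- m)).
    have := bs_catr (Ct (powb (- m))) (powb_cancel n); by rewrite cats0.
  apply: (bs_trans (bs_sym h2)); rewrite catA.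
  have h3 : Ct (powb (- m)) ++ powb n ~~ Ct (powb (- m) ++ powb m).
    apply: (bs_trans (bs_catr _ (bs_sym (bs_rel m n)))).
    apply: bs_sym; exact: Ct_cat.
  apply: (bs_trans (bs_catl _ h3)).
  have h4 : Ct (powb (- m) ++ powb m) ~~ Ct [::].
    apply: Ct_cong; have := powb_cancel (- m); by rewrite opprK.
  apply: (bs_trans (bs_catl _ h4)).
  exact: (bs_catl _ Ct_nil).
have h1 : Ct (powb (m * - Posz k - m)) ~~ Ct (powb (m * - Posz k) ++ powb (- m)).
  apply: Ct_cong; exact: powbD.
apply: (bs_trans h1); apply: (bs_trans (Ct_cat _ _)).
apply: (bs_trans (bs_cat IH hm)).
apply: bs_sym; exact: powbD.
Qed.

Lemma Cti_Ct u : Cti (Ct u) ~~ u.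
Proof.
rewrite /Cti /Ct /= -catA /=.
have h := bs_cancel [::] Lti (u ++ [:: Lti; Lt]); apply: (bs_trans h).
have := bs_cancel u Lti [::]; by rewrite cats0.
Qed.

Lemma Cti_cong u v : u ~~ v -> Cti u ~~ Cti v.
Proof. move=> h; rewrite /Cti; apply: bs_cons; exact: bs_catl. Qed.

Lemma Cti_pow k : Cti (powb (n * k)) ~~ powb (m * k).
Proof.
apply: bs_trans (Cti_cong (bs_sym (Ct_pow k))) _; exact: Cti_Ct.
Qed.

Lemma Lt_conj k : [:: Lt] ~~ powb (k * n) ++ Lt :: powb (- (k * m)).
Proof.
apply: bs_sym; rewrite mulrC [k * m]mulrC.
apply: bs_trans (bs_catl _ (bs_sym (Ct_pow k))) _.
rewrite /Ct /= -catA /=.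
apply: bs_trans (bs_cons _ (bs_cancel (powb (m * k)) Lti (powb (- (m * k))))) _.
apply: bs_cons; have := powb_cancel (m * k); move/(bs_catr [::]); by [].
Qed.

Lemma Lti_conj k : [:: Lti] ~~ powb (k * m) ++ Lti :: powb (- (k * n)).
Proof.
apply: bs_sym; rewrite mulrC [k * n]mulrC.
apply: bs_trans (bs_catl _ (bs_sym (Cti_pow k))) _.
rewrite /Cti /= -catA /=.
apply: bs_trans (bs_cons _ (bs_cancel (powb (n * k)) Lt (powb (- (n * k))))) _.
apply: bs_cons; have := powb_cancel (n * k); move/(bs_catr [::]); by [].
Qed.

End BSW.

Definition is_t (l : letter) : bool := if l is Lt then true else if l is Lti then true else false.
Definition tfree (w : seq letter) : bool := all (fun l => ~~ is_t l) w.
Definition lv (l : letter) : int := match l with Lb => 1 | Lbi => -1 | _ => 0 end.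
Fixpoint bsum (w : seq letter) : int := if w is l :: w' then lv l + bsum w' else 0.

Lemma tfree_bs m n w : tfree w -> bs_eq m n w (powb (bsum w)).
Proof.
elim: w => [|l w IH] /=; first by move=> _; exact: bs_refl.
case: l => //= /IH h.
  apply: bs_trans (bs_cons Lb h) _; apply: bs_sym; exact: (powbD m n 1).
apply: bs_trans (bs_cons Lbi h) _; apply: bs_sym; exact: (powbD m n (-1)).
Qed.

Section Act.
Variables (m n : int) (X : Type) (a : preaction m n X) (sat : saturated a).
Local Notation bp := (bpow (pa_b a) (pa_bi a)).
Local Notation "u ~~ v" := (bs_eq m n u v) (at level 70).

Lemma bpD i j x : bp (i + j) x = bp j (bp i x).
Proof. apply: bpowD; [exact: pa_bK | exact: pa_biK]. Qed.
Lemma bpK i x : bp (- i) (bp i x) = x.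
Proof. by rewrite -bpD addrN. Qed.
Lemma bpKV i x : bp i (bp (- i) x) = x.
Proof. by rewrite -bpD addNr. Qed.

Definition tf x := Defs.tval a x.
Lemma tfP x : pa_t a x = Some (tf x).
Proof. rewrite /tf /Defs.tval; case: (sat x) => [[y ->] _] //. Qed.
Definition tif (x : X) : X :=
  proj1_sig (constructive_indefinite_description _ (proj2 (sat x))).
Lemma tifP x : pa_t a (tif x) = Some x.
Proof. rewrite /tif; case: constructive_indefinite_description => //. Qed.
Lemma tfK x : tif (tf x) = x.
Proof. apply: (pa_t_inj (tifP (tf x))); exact: tfP. Qed.
Lemma tifK x : tf (tif x) = x.
Proof. by have := tifP x; rewrite tfP => -[]. Qed.
Lemma tf_inj x y : tf x = tf y -> x = y.
Proof. by move=> h; rewrite -(tfK x) h tfK. Qed.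

Definition step (x : X) (l : letter) : X :=
  match l with Lb => pa_b a x | Lbi => pa_bi a x | Lt => tf x | Lti => tif x end.
Definition endp (x : X) (w : seq letter) : X := foldl step x w.

Lemma endp_cat x u v : endp x (u ++ v) = endp (endp x u) v.
Proof. exact: foldl_cat. Qed.

Lemma step_linv x l : step (step x l) (linv l) = x.
Proof. case: l => /=; [exact: pa_bK | exact: pa_biK | exact: tfK | exact: tifK]. Qed.

Lemma sch_step_step x l : sch_step a x l (step x l).
Proof. case: l => //=; [exact: tfP | exact: tifP]. Qed.

Lemma sch_step_eq x l y : sch_step a x l y -> y = step x l.
Proof.
case: l => //= h; first by move: h; rewrite tfP => -[].
apply: (pa_t_inj h); exact: tifP.
Qed.

Lemma walk_endp x w y : walk a x w y <-> y = endp x w.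
Proof.
split; first by elim=> [//|x' l x'' w' y' /sch_step_eq -> _ ->].
move=> ->; elim: w x => [|l w IH] x; first exact: walk_nil.
apply: walk_cons (sch_step_step x l) _; exact: IH.
Qed.

Lemma endp_powb k x : endp x (powb k) = bp k x.
Proof.
case: k => [j|j] /=.
  by elim: j x => [|j IH] x //=; rewrite IH -iterSr.
rewrite /endp /=; elim: j x => [|j IH] x //=.
rewrite /= in IH *; by rewrite IH -iterSr.
Qed.

Lemma endp_winv x w : endp (endp x w) (winv w) = x.
Proof.
elim: w x => [|l w IH] x //=.
rewrite /winv /= rev_cons -cats1 endp_cat.
rewrite -/(winv w) IH /=; exact: step_linv.
Qed.

Lemma winvK w : winv (winv w) = w.
Proof.
rewrite /winv map_rev revK -map_comp; rewrite -[RHS]map_id.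
by apply: eq_map => -[].
Qed.

Lemma endp_winvV x w : endp (endp x (winv w)) w = x.
Proof. have := endp_winv x (winv w); by rewrite winvK. Qed.

Lemma tf_bpn x : tf (bp n x) = bp m (tf x).
Proof. by have := pa_comm (tfP x); rewrite tfP => -[]. Qed.

Lemma tf_comm k x : tf (bp (k * n) x) = bp (k * m) (tf x).
Proof.
elim/int_ind: k => [|k IH|k IH]; first by rewrite !mul0r.
  have -> : Posz k.+1 = Posz k + 1 by lia.
  by rewrite !mulrDl !mul1r !bpD tf_bpn IH.
have -> : - Posz k.+1 = - Posz k - 1 by lia.
rewrite !mulrDl !mulN1r.
set y := bp _ x.
have hy : bp n y = bp (- Posz k * n) x by rewrite /y -bpD addrNK.
have := tf_bpn y; rewrite hy IH => h.
by rewrite bpD h bpK.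
Qed.

Lemma tif_comm k y : tif (bp (k * m) y) = bp (k * n) (tif y).
Proof. apply: tf_inj; by rewrite tifK tf_comm tifK. Qed.

Lemma bs_endp w w' : w ~~ w' -> forall x, endp x w = endp x w'.
Proof.
elim=> //.
- by move=> w1 w2 w3 _ h1 _ h2 x; rewrite h1 h2.
- by move=> u v w1 w2 _ h x; rewrite !endp_cat h.
- by move=> l x; rewrite /endp /= -/(step _ _) step_linv.
move=> x; rewrite /= endp_cat endp_powb /= endp_powb.
by have := tif_comm 1 (tf x); rewrite !mul1r tfK.
Qed.

Local Notation so := (same_orbit a).
Lemma so_refl x : so x x. Proof. by exists 0. Qed.
Lemma so_sym x y : so x y -> so y x.
Proof. by case=> k ->; exists (- k); rewrite bpK. Qed.
Lemma so_trans x y z : so x y -> so y z -> so x z.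
Proof. by case=> k -> [j ->]; exists (k + j); rewrite bpD. Qed.
Lemma so_bp k x : so x (bp k x). Proof. by exists k. Qed.

Lemma tfree_endp w x : tfree w -> endp x w = bp (bsum w) x.
Proof.
elim: w x => [|l w IH] x //=.
case: l => //= /IH h; rewrite -/(endp _ _) h bpD //.
Qed.

Lemma tfree_so w x : tfree w -> so x (endp x w).
Proof. by move/tfree_endp => ->; exact: so_bp. Qed.

Definition edge_of (x : X) (l : letter) : edge X :=
  if l is Lti then (false, tif x) else (true, x).
Fixpoint tedges (x : X) (w : seq letter) : seq (edge X) :=
  if w is l :: w' then
    (if is_t l then edge_of x l :: tedges (step x l) w' else tedges (step x l) w')
  else [::].

Lemma orig_edge_of x l : is_t l -> orig a (edge_of x l) = x.
Proof. case: l => //= _; exact: tifK. Qed.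
Lemma targ_edge_of x l : is_t l -> targ a (edge_of x l) = step x l.
Proof. by case: l. Qed.
Lemma valid_all e : valid_edge a e.
Proof. exact: (proj1 (sat _)). Qed.
Lemma targ_opp e : targ a (Defs.opp e) = orig a e.
Proof. by case: e => -[] x. Qed.

Lemma tedges_cat x u v : tedges x (u ++ v) = tedges x u ++ tedges (endp x u) v.
Proof. elim: u x => [|l u IH] x //=; case: (is_t l); rewrite IH //. Qed.

Lemma tedges_nil x w : tedges x w = [::] -> tfree w.
Proof. elim: w x => [|l w IH] x //=; case: l => //= /IH //. Qed.

Fixpoint allpts (P : X -> Prop) (x : X) (w : seq letter) : Prop :=
  P x /\ (if w is l :: w' then allpts P (step x l) w' else True).

Lemma allpts_head P x w : allpts P x w -> P x.
Proof. by case: w => [|? ?] []. Qed.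

Lemma allpts_cat P x u v : allpts P x (u ++ v) <-> allpts P x u /\ allpts P (endp x u) v.
Proof.
elim: u x => [|l u IH] x /=.
  split; [move=> h; split; [split; [exact: allpts_head h|done]| done] | by case].
rewrite IH; tauto.
Qed.

Lemma allpts_end P x w : allpts P x w -> P (endp x w).
Proof. by elim: w x => [|l w IH] x /= [] // _ /IH. Qed.

Lemma allpts_tfree P x w : (forall y, so x y -> P y) -> tfree w -> allpts P x w.
Proof.
elim: w x => [|l w IH] x hP /=; first by split=> //; apply: hP; exact: so_refl.
case: l => //= hw; (split; [apply: hP; exact: so_refl|]); apply: IH hw => y hy;
  apply: hP; apply: so_trans hy; rewrite /step.
- by exists 1.
- by exists (-1).
Qed.

Lemma edge_eq_targ e f : edge_eq a e f -> so (targ a e) (targ a f).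
Proof.
case: e f => [s x] [s' y] [/= <- [k ->]].
case: s => /=; last exact: so_bp.
rewrite /targ /=.
have := tf_comm k x; rewrite /tf => ->; exact: so_bp.
Qed.

Lemma bp_period x (L : nat) c : iter L (pa_b a) x = x -> bp (Posz L * c) x = x.
Proof.
move=> hL; have h1 : bp (Posz L) x = x by [].
have h2 : bp (- Posz L) x = x by have := bpK (Posz L) x; rewrite h1.
elim/int_ind: c => [|c IH|c IH]; first by rewrite mulr0.
  have -> : Posz c.+1 = Posz c + 1 by lia.
  by rewrite mulrDr mulr1 bpD IH.
have -> : - Posz c.+1 = - Posz c - 1 by lia.
by rewrite mulrDr mulrN1 bpD IH.
Qed.

Lemma fin_div x L j : fin_lab a x L -> bp j x = x -> (Posz L %| j)%Z.
Proof.
case=> L0 [hL hmin] hj.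
have hr : bp (j %% Posz L)%Z x = x.
  by move: hj; rewrite {1}(divz_eq j (Posz L)) mulrC bpD bp_period.
apply/dvdz_mod0P.
have hlt := ltz_pmod j (_ : 0 < Posz L).
have hge := modz_ge0 j (_ : Posz L != 0).
case E : (j %% Posz L)%Z hr hlt hge => [r|r] hr hlt hge.
  case: r E hr hlt hge => // r E hr hlt hge; exfalso.
  apply: (hmin r.+1) => //.
  have := hlt (_ : 0 < Posz L); lia.
have := hge (_ : Posz L != 0); lia.
Qed.

Lemma inf_zero x j : inf_lab a x -> bp j x = x -> j = 0.
Proof.
case: j => [j|j] h hj.
  by case: j hj => // j hj; case: (h j.+1 isT).
have := bpK (Negz j) x; rewrite hj => hx.
by case: (h j.+1 isT).
Qed.

Lemma ex_min (P : nat -> Prop) k : P k -> exists k0, P k0 /\ forall j, (j < k0)%N -> ~ P j.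
Proof.
elim/ltn_ind: k => k IH hk.
case: (classic (exists j, (j < k)%N /\ P j)) => [[j [hj pj]]|hn].
  exact: IH hj pj.
by exists k; split => // j hj pj; apply: hn; exists j.
Qed.

Lemma label_class x : (exists L, fin_lab a x L) \/ inf_lab a x.
Proof.
case: (classic (exists k, (0 < k)%N /\ iter k (pa_b a) x = x)) => [[k hk]|hn];
  last by right=> k hk hx; apply: hn; exists k.
left; have [k0 [[h0 h1] hmin]] := @ex_min (fun k => (0 < k)%N /\ iter k (pa_b a) x = x) k hk.
exists k0; split => //; split => // j hj hj' hx.
exact: (hmin j hj' (conj hj hx)).
Qed.

Lemma child_div (f : edge X)
  (hinf : inf_lab a (orig a f) -> inf_lab a (targ a f))
  (hfin : forall k, fin_lab a (orig a f) k -> fin_lab a (targ a f) (child_lab m n f.1 k))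
  j : bp j (targ a f) = targ a f -> ((if f.1 then m else n) %| j)%Z.
Proof.
move=> hj; case: (label_class (orig a f)) => [[L hL]|hI].
  have := fin_div (hfin _ hL) hj; apply: dvdz_trans.
  rewrite dvdzE /= /child_lab; case: f.1.
    by rewrite -muln_divA ?dvdn_gcdl // dvdn_mulr.
  by rewrite -muln_divA ?dvdn_gcdl // dvdn_mulr.
by rewrite (inf_zero (hinf hI) hj) dvdz0.
Qed.

Lemma elimLt p i k :
  (forall j, bp j (tf p) = tf p -> (m %| j)%Z) ->
  tif (bp i (tf p)) = bp (k * n) p ->
  exists j0, tif (bp i (tf p)) = bp j0 p /\ Ct (powb i) ~~ powb j0.
Proof.
move=> hd he.
have h1 : bp i (tf p) = bp (k * m) (tf p) by rewrite -tf_comm -he tifK.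
have h2 : bp (i - k * m) (tf p) = tf p by rewrite bpD h1 bpK.
have /dvdzP [q hq] := hd _ h2.
have hi : i = (q + k) * m by rewrite mulrDl -hq subrK.
exists ((q + k) * n); split.
  by rewrite hi tif_comm tfK.
rewrite hi mulrC [_ * n]mulrC; exact: Ct_pow.
Qed.

Lemma elimLti p i k :
  (forall j, bp j (tif p) = tif p -> (n %| j)%Z) ->
  bp i (tif p) = bp (k * n) (tif p) ->
  exists j0, tf (bp i (tif p)) = bp j0 p /\ Cti (powb i) ~~ powb j0.
Proof.
move=> hd he.
have h2 : bp (i - k * n) (tif p) = tif p by rewrite bpD he bpK.
have /dvdzP [q hq] := hd _ h2.
have hi : i = (q + k) * n by rewrite mulrDl -hq subrK.
exists ((q + k) * m); split.
  by rewrite hi tf_comm tifK.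
rewrite hi mulrC [_ * m]mulrC; exact: Cti_pow.
Qed.

Lemma so_stepb x l : ~~ is_t l -> so x (step x l).
Proof. by case: l => // _; [exists 1 | exists (-1)]. Qed.

Lemma rpath1 e q l : is_t l -> so (targ a e) q -> ~ edge_eq a (Defs.opp e) (edge_of q l) ->
  forall es, rpath a (edge_of q l) es -> rpath a e (edge_of q l :: es).
Proof.
move=> hl hso hne es hr /=; split; first exact: valid_all.
by split; [rewrite orig_edge_of | split].
Qed.

Lemma dec w : forall q e, so (targ a e) q -> ~ rpath a e (tedges q w) ->
 (exists wb l2 w2, w = wb ++ l2 :: w2 /\ tfree wb /\ is_t l2 /\
     edge_eq a (Defs.opp e) (edge_of (endp q wb) l2)) \/
 (exists w1 l1 wb l2 w2, w = w1 ++ l1 :: wb ++ l2 :: w2 /\ tfree wb /\ is_t l1 /\ is_t l2 /\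
    rpath a e (tedges q (w1 ++ [:: l1])) /\
    edge_eq a (Defs.opp (edge_of (endp q w1) l1))
                (edge_of (endp (step (endp q w1) l1) wb) l2)).
Proof.
elim: w => [|l w IH] q e hso hr; first by exfalso; apply: hr.
case hl: (is_t l).
  have hr' : ~ rpath a e (edge_of q l :: tedges (step q l) w) by move: hr; rewrite /= hl.
  case: (classic (edge_eq a (Defs.opp e) (edge_of q l))) => heq.
    by left; exists [::], l, w.
  have hr2 : ~ rpath a (edge_of q l) (tedges (step q l) w).
    by move=> h; apply: hr'; exact: rpath1.
  have hso2 : so (targ a (edge_of q l)) (step q l) by rewrite targ_edge_of //; exact: so_refl.
  case: (IH _ _ hso2 hr2) => [[wb [l2 [w2 [-> [hwb [hl2 he]]]]]] |
      [w1 [l1 [wb [l2 [w2 [-> [hwb [hl1 [hl2 [hrp he]]]]]]]]]]].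
    right; exists [::], l, wb, l2, w2; do 5 (split => //).
    by rewrite /= hl; apply: rpath1.
  right; exists (l :: w1), l1, wb, l2, w2; do 5 (split => //).
  by rewrite /= hl; apply: rpath1.
have hr' : ~ rpath a e (tedges (step q l) w) by move: hr; rewrite /= hl.
have hso2 : so (targ a e) (step q l) by apply: so_trans hso (so_stepb _ _); rewrite hl.
case: (IH _ _ hso2 hr') => [[wb [l2 [w2 [-> [hwb [hl2 he]]]]]] |
    [w1 [l1 [wb [l2 [w2 [-> [hwb [hl1 [hl2 [hrp he]]]]]]]]]]].
  by left; exists (l :: wb), l2, w2; rewrite /= hl.
right; exists (l :: w1), l1, wb, l2, w2; do 5 (split => //).
by rewrite /= hl.
Qed.

Lemma orig_opp e : orig a (Defs.opp e) = targ a e.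
Proof. by case: e => -[] x. Qed.
Lemma opp_opp (e : edge X) : Defs.opp (Defs.opp e) = e.
Proof. by case: e => -[] x. Qed.
Lemma edge_eq_opp e f : edge_eq a e f -> edge_eq a (Defs.opp e) (Defs.opp f).
Proof. by case=> h1 h2; split => //=; rewrite h1. Qed.

Lemma last_targ w : forall q f fs, tedges q w = f :: fs -> so (targ a (last f fs)) (endp q w).
Proof.
elim: w => [|l w IH] q f fs //=.
case hl: (is_t l); last exact: IH.
case=> <- <-; case E: (tedges (step q l) w) => [|g gs] /=.
  rewrite targ_edge_of //; exact: tfree_so (tedges_nil E).
exact: IH E.
Qed.

Lemma first_edge w : forall q f fs, tedges q w = f :: fs ->
  exists w0 l w', [/\ w = w0 ++ l :: w', tfree w0, is_t l, f = edge_of (endp q w0) l &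
                     fs = tedges (step (endp q w0) l) w'].
Proof.
elim: w => [|l w IH] q f fs //=.
case hl: (is_t l).
  by case=> <- <-; exists [::], l, w.
move=> /IH [w0 [l' [w' [-> h1 h2 h3 h4]]]].
by exists (l :: w0), l', w'; split => //=; rewrite hl.
Qed.

Lemma allpts_targs (P : X -> Prop) w : forall q, allpts P q w ->
  allS (fun f => P (targ a f)) (tedges q w).
Proof.
elim: w => [|l w IH] q //= [_ hw].
case hl: (is_t l) => /=; last exact: IH.
split; last exact: IH.
rewrite targ_edge_of //; exact: allpts_head hw.
Qed.

Lemma backtrack p1 l1 i l2 :
  is_t l1 -> is_t l2 ->
  edge_eq a (Defs.opp (edge_of p1 l1)) (edge_of (bp i (step p1 l1)) l2) ->
  (forall j, bp j (targ a (edge_of p1 l1)) = targ a (edge_of p1 l1) ->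
       ((if (edge_of p1 l1).1 then m else n) %| j)%Z) ->
  exists j0, step (bp i (step p1 l1)) l2 = bp j0 p1 /\ l1 :: powb i ++ [:: l2] ~~ powb j0.
Proof.
case: l1 => // _; case: l2 => // _ [/= hs [k hk]] hd //.
  have [j0 [h1 h2]] := @elimLt p1 i k hd hk.
  by exists j0.
have [j0 [h1 h2]] := @elimLti p1 i k hd hk.
by exists j0.
Qed.

End Act.

Lemma walk_cat m n Y (c : preaction m n Y) x u y v z :
  walk c x u y -> walk c y v z -> walk c x (u ++ v) z.
Proof. elim=> // x1 l x2 w y1 hs _ IH h; exact: walk_cons hs (IH h). Qed.

Lemma walk_nseqb m n Y (c : preaction m n Y) j x : walk c x (nseq j Lb) (iter j (pa_b c) x).
Proof.
elim: j x => [|j IH] x /=; first exact: walk_nil.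
have h := IH (pa_b c x); rewrite -iterSr /= in h; by apply: (walk_cons _ h).
Qed.
Lemma walk_nseqbi m n Y (c : preaction m n Y) j x : walk c x (nseq j Lbi) (iter j (pa_bi c) x).
Proof.
elim: j x => [|j IH] x /=; first exact: walk_nil.
have h := IH (pa_bi c x); rewrite -iterSr /= in h; by apply: (walk_cons _ h).
Qed.
Lemma walk_powb m n Y (c : preaction m n Y) k x :
  walk c x (powb k) (bpow (pa_b c) (pa_bi c) k x).
Proof. case: k => j; [exact: walk_nseqb | exact: walk_nseqbi]. Qed.

Section Main.
Variables (m n : int) (X0 X : Type) (a0 : preaction m n X0) (a : preaction m n X)
  (iota : X0 -> X).
Hypothesis H : max_forest_saturation a0 a iota.
Hypothesis sat : saturated a.
Local Notation bp := (bpow (pa_b a) (pa_bi a)).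
Local Notation bp0 := (bpow (pa_b a0) (pa_bi a0)).
Local Notation so := (same_orbit a).
Local Notation ep := (endp sat).
Local Notation st := (step sat).
Local Notation tF := (tf a).
Local Notation tI := (tif sat).
Local Notation oldv := (old_v a iota).
Local Notation newv := (new_v a iota).
Local Notation "u ~~ v" := (bs_eq m n u v) (at level 70).

Lemma ext : extends a0 a iota.
Proof. by case: H => _ []. Qed.

Lemma iota_inj : injective iota. Proof. by case: ext. Qed.
Lemma iota_b x : iota (pa_b a0 x) = pa_b a (iota x). Proof. by case: ext => _ [h _]. Qed.
Lemma iota_t x y : pa_t a0 x = Some y -> pa_t a (iota x) = Some (iota y).
Proof. by case: ext => _ [_ h]; apply: h. Qed.
Lemma iota_bi x : iota (pa_bi a0 x) = pa_bi a (iota x).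
Proof.
apply: (can_inj (pa_bK a)); by rewrite -iota_b (pa_biK a0) (pa_biK a).
Qed.
Lemma iota_bp k x : iota (bp0 k x) = bp k (iota x).
Proof.
have h1 : forall j, iota (iter j (pa_b a0) x) = iter j (pa_b a) (iota x).
  move=> j; elim: j => [|j IH] //=; by rewrite iota_b IH.
have h : forall j, iota (iter j (pa_bi a0) x) = iter j (pa_bi a) (iota x).
  move=> j; elim: j => [|j IH] //=; by rewrite iota_bi IH.
case: k => j; [exact: h1 | exact: (h j.+1)].
Qed.
Lemma iota_tf y0 y1 : pa_t a0 y0 = Some y1 -> tF (iota y0) = iota y1.
Proof. by move/iota_t; rewrite (tfP sat) => -[]. Qed.

Lemma old_so x y : oldv x -> so x y -> oldv y.
Proof. case=> y0 h hxy; exists y0; apply: so_trans h; exact: so_sym. Qed.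
Lemma new_so x y : newv x -> so x y -> newv y.
Proof. move=> hn hxy ho; apply: hn; apply: old_so ho _; exact: so_sym. Qed.
Lemma old_iota u : oldv (iota u). Proof. by exists u; exact: so_refl. Qed.
Lemma old_inv y : oldv y -> exists u, y = iota u.
Proof.
case=> y0 [k hk]; exists (bp0 (- k) y0).
by rewrite iota_bp hk bpK.
Qed.

Lemma walk_iota x w y : walk a0 x w y -> walk a (iota x) w (iota y).
Proof.
elim=> [x1|x1 l x2 w1 y1 hs _ IH]; first exact: walk_nil.
apply: walk_cons IH; case: l hs => /=.
- by move=> ->; rewrite iota_b.
- by move=> ->; rewrite iota_bi.
- exact: iota_t.
- exact: iota_t.
Qed.

Lemma nc_so x x' y : so x x' -> new_conn a iota x' y -> new_conn a iota x y.
Proof.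
move=> hx hc; elim: hc x hx => [x1 y1 h|x1 e y1 hv h1 h2 h3 _] x hx.
  apply: nc_refl; exact: so_trans hx h.
apply: nc_step hv _ h2 h3; exact: so_trans hx h1.
Qed.

Lemma allpts_conn w : forall x, allpts sat newv x w -> new_conn a iota x (ep x w).
Proof.
elim: w => [|l w IH] x /= [hx hw]; first by apply: nc_refl; exact: so_refl.
have h := IH _ hw.
case hl: (is_t l).
  apply: (@nc_step _ _ _ _ _ _ _ (edge_of sat x l)); first exact: valid_all.
  - rewrite orig_edge_of //; exact: so_refl.
  - rewrite targ_edge_of //; exact: allpts_head hw.
  - by rewrite targ_edge_of.
apply: nc_so h; apply: so_stepb; by rewrite hl.
Qed.

Lemma conn_reach x y : new_conn a iota x y -> exists w, ep x w = y.
Proof.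
elim=> [x1 y1 [k ->]|x1 e y1 hv [k hk] hn _ [w hw]].
  by exists (powb k); rewrite endp_powb.
case: e hv hk hn hw => -[] z hv hk hn hw.
  exists (powb k ++ Lt :: w); rewrite endp_cat endp_powb -hk /=.
  by rewrite -hw.
exists (powb k ++ Lti :: w); rewrite endp_cat endp_powb -hk /=.
rewrite -hw; congr (endp _ _ _); rewrite /targ /=; exact: tfK.
Qed.

Lemma hold x : oldv x -> oldv (Defs.tval a x) ->
  exists y0, in_dom (pa_t a0) y0 /\ edge_eq a (true, x) (true, iota y0).
Proof. case: H => _ [_ [h _]] hx hx'; apply: h => //; exact: (proj1 (sat x)). Qed.

Lemma hforest e es : rpath a e es -> newv (orig a e) ->
  allS (fun f => newv (targ a f)) (e :: es) -> ~ so (targ a (last e es)) (orig a e).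
Proof. case: H => _ [_ [_ [h _]]]; apply: h; exact: valid_all. Qed.

Lemma hattach1 v : newv v ->
  exists e, valid_edge a e /\ oldv (orig a e) /\ new_conn a iota v (targ a e).
Proof. by case: H => _ [_ [_ [_ [h _]]]] /h []. Qed.

Lemma hattach2 v e e' : newv v -> oldv (orig a e) -> oldv (orig a e') ->
  new_conn a iota v (targ a e) -> new_conn a iota v (targ a e') -> edge_eq a e e'.
Proof.
case: H => _ [_ [_ [_ [h _]]]] /h [_ h2] ho ho' hc hc'.
apply: h2 => //; exact: valid_all.
Qed.

Lemma label_div e es : rpath a e es -> oldv (orig a e) ->
  allS (fun f => newv (targ a f)) (e :: es) ->
  forall j, bp j (targ a (last e es)) = targ a (last e es) ->
    ((if (last e es).1 then m else n) %| j)%Z.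
Proof.
case: H => _ [_ [_ [_ [_ h]]]] hr ho hall.
have [h1 h2] := h e es (valid_all sat e) hr ho hall.
exact: child_div h1 h2.
Qed.

Lemma tfree_powb j : tfree (powb j).
Proof. by case: j => k; elim: k => //= k ->. Qed.
Lemma tfree_count w : tfree w -> count is_t w = 0%N.
Proof. elim: w => //= l w IH /andP [h1 h2]; by rewrite (negbTE h1) IH. Qed.

Lemma exit_split w : forall z, newv z -> oldv (ep z w) ->
  exists w1 l2 w2, [/\ w = w1 ++ l2 :: w2, allpts sat newv z w1 & oldv (st (ep z w1) l2)].
Proof.
elim: w => [|l w IH] z hz /= ho; first by exfalso.
case: (classic (oldv (st z l))) => hs.
  by exists [::], l, w.
have [w1 [l2 [w2 [-> h1 h2]]]] := IH _ hs ho.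
by exists (l :: w1), l2, w2.
Qed.

Lemma inner N : forall w q, count is_t w = N -> allpts sat newv q w -> so q (ep q w) ->
  forall E, oldv (orig a E) -> so (targ a E) q ->
  exists j, ep q w = bp j q /\ w ~~ powb j.
Proof.
elim/ltn_ind: N => N IHN w q hN hw hso E hE hEq.
case Et: (tedges sat q w) => [|f1 fs].
  have ht := tedges_nil Et.
  by exists (bsum w); split; [exact: tfree_endp | exact: tfree_bs].
have hqn : newv q := allpts_head hw.
have hnr : ~ rpath a E (tedges sat q w).
  rewrite Et => /= [[_ [_ [_ hr]]]].
  have [w0 [l [w' [ew hw0 hl ef efs]]]] := first_edge Et.
  have ho : orig a f1 = ep q w0 by rewrite ef orig_edge_of.
  apply: (hforest hr).
  - rewrite ho; move: hw; rewrite ew => /allpts_cat [_ h]; exact: allpts_head h.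
  - rewrite -Et; exact: allpts_targs hw.
  - rewrite ho; apply: so_trans (last_targ Et) _; apply: so_trans (so_sym hso) _.
    exact: tfree_so.
have [[wb [l2 [w2 [ew [hwb [hl2 he]]]]]] |
      [w1 [l1 [wb [l2 [w2 [ew [hwb [hl1 [hl2 [hrp he]]]]]]]]]]] := dec hEq hnr.
  exfalso; have := edge_eq_targ sat he; rewrite targ_opp targ_edge_of // => hs.
  have hold' : oldv (st (ep q wb) l2) := old_so hE hs.
  move: hw; rewrite ew -cat1s catA => /allpts_cat [hn _]; apply: (allpts_end hn).
  by rewrite endp_cat.
set p1 := ep q w1.
have ew' : w = (w1 ++ [:: l1]) ++ (wb ++ l2 :: w2) by rewrite ew -catA.
have hw1 : allpts sat newv q (w1 ++ [:: l1]) by move: hw; rewrite ew' => /allpts_cat [].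
have hall : allS (fun f => newv (targ a f)) (E :: tedges sat q (w1 ++ [:: l1])).
  split; [exact: new_so hqn (so_sym hEq) | exact: allpts_targs hw1].
have hlast : last E (tedges sat q (w1 ++ [:: l1])) = edge_of sat p1 l1.
  by rewrite tedges_cat /= hl1 last_cat.
have hd := label_div hrp hE hall; rewrite hlast in hd.
rewrite (tfree_endp sat _ hwb) in he.
have [j0 [h1 h2]] := backtrack hl1 hl2 he hd.
set w' := w1 ++ powb j0 ++ w2.
have hep : ep q w' = ep q w.
  have e1 : ep q w = ep (st (bp (bsum wb) (st p1 l1)) l2) w2.
    rewrite ew endp_cat -/p1 -(tfree_endp sat _ hwb).
    change (ep (st p1 l1) (wb ++ l2 :: w2) = ep (st (ep (st p1 l1) wb) l2) w2).
    by rewrite endp_cat.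
  by rewrite e1 /w' !endp_cat -/p1 endp_powb h1.
have hc : (count is_t w' < N)%N.
  rewrite -hN ew /w' !count_cat /= !count_cat /= hl1 hl2 (tfree_count hwb) (tfree_count (tfree_powb _)).
  lia.
have hw' : allpts sat newv q w'.
  move: hw; rewrite ew => /allpts_cat [hq hr]; apply/allpts_cat; split => //.
  apply/allpts_cat; split.
    apply: allpts_tfree (tfree_powb _) => y hy; apply: new_so hy.
    exact: allpts_head hr.
  move: hr => /= [_]; rewrite -/p1 => /allpts_cat [_].
  move=> /= [_ h]; rewrite endp_powb; rewrite -/p1 in h1.
  by rewrite -h1 -(tfree_endp sat _ hwb).
have hso' : so q (ep q w') by rewrite hep.
have [j [hj1 hj2]] := IHN _ hc w' q erefl hw' hso' E hE hEq.
exists j; split; first by rewrite -hep.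
apply: bs_trans hj2; rewrite ew /w'; apply: bs_catr.
have -> : l1 :: wb ++ l2 :: w2 = (l1 :: wb ++ [:: l2]) ++ w2 by rewrite /= -catA.
apply: bs_catl; apply: bs_trans h2; apply: bs_cons; apply: bs_catl; exact: tfree_bs.
Qed.

Definition outer_stmt (N : nat) := forall w, count is_t w = N -> forall u v,
  ep (iota u) w = iota v -> exists w0, walk a0 u w0 v /\ w ~~ w0.

Lemma outer_new N (IHN : forall M, (M < N)%N -> outer_stmt M) l w u v :
  is_t l -> count is_t (l :: w) = N -> newv (st (iota u) l) ->
  ep (iota u) (l :: w) = iota v -> exists w0, walk a0 u w0 v /\ l :: w ~~ w0.
Proof.
move=> hl hN hz hv.
set z := st (iota u) l in hz hv.
have hv' : ep z w = iota v by [].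
have hoz : oldv (ep z w) by rewrite hv'; exact: old_iota.
have [w1 [l2 [w2 [ew hw1 ho]]]] := exit_split hz hoz.
set q' := ep z w1 in ho.
have hq' : newv q' := allpts_end hw1.
have hl2 : is_t l2.
  case hl2: (is_t l2) => //; exfalso; apply: hq'; apply: old_so ho _.
  apply: so_sym; apply: so_stepb; by rewrite hl2.
set E := edge_of sat (iota u) l.
have hoE : orig a E = iota u by rewrite orig_edge_of.
have htE : targ a E = z by rewrite targ_edge_of.
set F := Defs.opp (edge_of sat q' l2).
have hoF : orig a F = st q' l2 by rewrite orig_opp targ_edge_of.
have htF : targ a F = q' by rewrite targ_opp orig_edge_of.
have heq : edge_eq a E F.
  apply: (hattach2 hz).
  - rewrite hoE; exact: old_iota.
  - by rewrite hoF.
  - rewrite htE; apply: nc_refl; exact: so_refl.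
  - rewrite htF; exact: allpts_conn hw1.
have heq' : edge_eq a (Defs.opp E) (edge_of sat q' l2).
  by have := edge_eq_opp heq; rewrite opp_opp.
have hzq : so z q' by have := edge_eq_targ sat heq; rewrite htE htF.
have hEo : oldv (orig a E) by rewrite hoE; exact: old_iota.
have hEz : so (targ a E) z by rewrite htE; exact: so_refl.
have [j [hj1 hj2]] := inner erefl hw1 hzq hEo hEz.
have hEa : allS (fun f => newv (targ a f)) [:: E] by split => //; rewrite htE.
have hd := @label_div E [::] I hEo hEa.
have hq'e : q' = bp j z by exact: hj1.
rewrite hq'e in heq'.
have [j0 [h1 h2]] := backtrack hl hl2 heq' hd.
have hv2 : ep (iota (bp0 j0 u)) w2 = iota v.
  by rewrite iota_bp -h1 -hj1 -/q' -hv' ew endp_cat.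
have hc : (count is_t w2 < N)%N.
  by rewrite -hN ew /= count_cat /= hl hl2; lia.
have [w0 [hw0 hb]] := IHN _ hc w2 erefl _ _ hv2.
exists (powb j0 ++ w0); split.
  apply: walk_cat hw0; exact: walk_powb.
rewrite ew.
have -> : l :: w1 ++ l2 :: w2 = (l :: w1 ++ [:: l2]) ++ w2 by rewrite /= -catA.
apply: bs_cat hb; apply: bs_trans h2; apply: bs_cons; apply: bs_catl; exact: hj2.
Qed.

Lemma outer N : outer_stmt N.
Proof.
elim/ltn_ind: N => N IHN w; elim: w => [|l w IHw] hN u v hv.
  exists [::]; split; last exact: bs_refl.
  have -> : u = v by apply: iota_inj. exact: walk_nil.
case hl: (is_t l); last first.
  case: l hl hN hv => // _ hN hv.
    have hv' : ep (iota (pa_b a0 u)) w = iota v by rewrite iota_b.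
    have [w0 [hw0 hb]] := IHw hN _ _ hv'.
    by exists (Lb :: w0); split; [exact: walk_cons hw0 | exact: bs_cons].
  have hv' : ep (iota (pa_bi a0 u)) w = iota v by rewrite iota_bi.
  have [w0 [hw0 hb]] := IHw hN _ _ hv'.
  by exists (Lbi :: w0); split; [exact: walk_cons hw0 | exact: bs_cons].
case: (classic (newv (st (iota u) l))) => hz.
  exact: (@outer_new N IHN l w u v hl hN hz hv).
have hzo : oldv (st (iota u) l) by apply: NNPP.
have hc : (count is_t w < N)%N by rewrite -hN /= hl.
case: l hl hN hv hz hzo => // _ hN hv _ hzo.
  have [y0 [[y1 hy1] [_ [k hk]]]] := hold (old_iota u) hzo.
  rewrite /= in hk.
  have hy0 : y0 = bp0 (k * n) u by apply: iota_inj; rewrite iota_bp.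
  have hz : tF (iota u) = iota (bp0 (- (k * m)) y1).
    by rewrite iota_bp -(iota_tf hy1) hk (tf_comm sat) bpK.
  have hv' : ep (iota (bp0 (- (k * m)) y1)) w = iota v by rewrite -hz.
  have [w0 [hw0 hb]] := IHN _ hc w erefl _ _ hv'.
  exists (powb (k * n) ++ Lt :: powb (- (k * m)) ++ w0); split.
    apply: walk_cat (walk_powb _ _ _) _; rewrite -hy0.
    apply: (walk_cons (l:=Lt) (x':=y1)) => //; apply: walk_cat hw0; exact: walk_powb.
  by have := bs_cat (Lt_conj m n k) hb; rewrite -catA.
have ho2 : oldv (Defs.tval a (tI (iota u))).
  change (oldv (tF (tI (iota u)))); rewrite tifK; exact: old_iota.
have [y0 [[y1 hy1] [_ [k hk]]]] := hold hzo ho2.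
rewrite /= in hk.
have hy1' : y1 = bp0 (k * m) u.
  by apply: iota_inj; rewrite -(iota_tf hy1) hk (tf_comm sat) tifK iota_bp.
have hz : tI (iota u) = iota (bp0 (- (k * n)) y0) by rewrite iota_bp hk bpK.
have hv' : ep (iota (bp0 (- (k * n)) y0)) w = iota v by rewrite -hz.
have [w0 [hw0 hb]] := IHN _ hc w erefl _ _ hv'.
exists (powb (k * m) ++ Lti :: powb (- (k * n)) ++ w0); split.
  apply: walk_cat (walk_powb _ _ _) _; rewrite -hy1'.
  apply: (walk_cons (x' := y0)) => //; apply: walk_cat hw0; exact: walk_powb.
by have := bs_cat (Lti_conj m n k) hb; rewrite -catA.
Qed.

End Main.

Close Scope ring_scope.

Theorem mainTheorem12 (m n : int) (hm : (2 <= absz m)%N) (hn : (2 <= absz n)%N)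
  (X0 X : Type) (a0 : preaction m n X0) (x0 : X0) (a : preaction m n X)
  (iota : X0 -> X) :
  transitive_pa a0 ->
  max_forest_saturation a0 a iota ->
  (forall g, stab a (iota x0) g <-> stab a0 x0 g) /\
  exists phi : seq letter -> X,
    phi [::] = iota x0 /\
    (forall g l, walk a (phi g) [:: l] (phi (rcons g l))) /\
    (forall g g', phi g = phi g' <-> stab a0 x0 (g ++ winv g')) /\
    (forall y, exists g, phi g = y).
Proof.
move=> htr H.
have sat : saturated a by case: H.
have hstab : forall g, stab a (iota x0) g <-> stab a0 x0 g.
  move=> g; split.
    case=> w [hw hg]; move/(walk_endp sat): hw => hw.
    have [w0 [hw0 hb]] := outer H (erefl (count is_t w)) (esym hw).
    exists w0; split; [exact: hw0 | exact: bs_trans hg hb].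
  case=> w [hw hg]; exists w; split. have := walk_iota H hw. done. exact: hg.
have reach_old : forall y, old_v a iota y -> exists g, endp sat (iota x0) g = y.
  move=> y /(old_inv H) [u ->].
  have [w hw] := htr x0 u.
  exists w; have := walk_iota H hw; by move/(walk_endp sat) => ->.
split => //.
exists (fun g => endp sat (iota x0) g); split => //.
split.
  move=> g l; apply/(walk_endp sat); by rewrite -cats1 endp_cat.
split.
  move=> g g'; rewrite -hstab; split.
    move=> e; exists (g ++ winv g'); split; last exact: bs_refl.
    apply/(walk_endp sat); by rewrite endp_cat e endp_winv.
  case=> w [hw hb]; move/(walk_endp sat): hw => hw.
  have : endp sat (iota x0) (g ++ winv g') = iota x0 by rewrite (bs_endp sat hb) -hw.
  rewrite endp_cat => e; by rewrite -{2}e endp_winvV.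
move=> y; case: (classic (old_v a iota y)) => hy; first exact: reach_old.
have [e [_ [he hc]]] := hattach1 H hy.
have [w hw] := conn_reach sat hc.
have [g hg] := reach_old _ he.
have hl : exists l, step sat (orig a e) l = targ a e.
  case: e {he hc hw hg} => -[] z; first by exists Lt.
  by exists Lti; rewrite /= tfK.
case: hl => l hl.
exists (g ++ l :: winv w).
rewrite endp_cat hg /= hl -hw; exact: endp_winv.
Qed.
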